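(* Let $G\subset \mathrm{SL}(3,\mathbb{C})$ be a finite abelian group of diagonal matrices. Then $$|G| = 1 + 2 j_G + \sum_{i=1}^3 (n_i - 1).$$
   Context: Each $g\in G$ of order $r$ is uniquely written $g=\mathrm{diag}(e^{2\pi\sqrt{-1}a_1/r},e^{2\pi\sqrt{-1}a_2/r},e^{2\pi\sqrt{-1}a_3/r})$ with integers $0\le a_i<r$. Its age is $\mathrm{age}(g)=\frac1r\sum_{i=1}^3 a_i$, which is an integer since $G\subset\mathrm{SL}(3,\mathbb{C})$. $N_g$ denotes the dimension of the fixed subspace of $g$ in $\mathbb{C}^3$. $j_G$ is the number of $g\in G$ with $\mathrm{age}(g)=1$ and $N_g=0$. For $i=1,2,3$, $K_i$ is the maximal subgroup of $G$ fixing the $i$-th coordinate $x_i$ (i.e. elements whose $i$-th diagonal entry is $1$), and $n_i=|K_i|$. *)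

(* Defs.v *)
From HB Require Import structures.
From mathcomp Require Import all_boot all_order all_algebra all_field.
Set Implicit Arguments. Unset Strict Implicit. Unset Printing Implicit Defensive.
Import GRing.Theory Num.Theory.
Local Open Scope ring_scope.

(* e^{2 pi i / r} in algC: r.-root (-1) is the root of -1 of minimal
   nonnegative argument, i.e. e^{i pi / r}; its square is e^{2 pi i / r}. *)
Definition zeta (r : nat) : algC := (r.-root (-1)) ^+ 2.

(* The order of g, computed by searching r = 1 .. N (N a bound, e.g. |G|,
   which bounds the order of any element of the finite group G). *)
Definition mx_order (N : nat) (g : 'M[algC]_3) : nat :=
  (find (fun r => g ^+ r.+1 == 1) (iota 0 N)).+1.

Definition expo (r : nat) (z : algC) : nat :=
  odflt 0%N (omap (@nat_of_ord r) [pick a : 'I_r | zeta r ^+ a == z]).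

Definition age (N : nat) (g : 'M[algC]_3) : rat :=
  let r := mx_order N g in
  (\sum_(i < 3) expo r (g i i))%:R / r%:R.

(* N_g : dimension of the fixed subspace {v | v g = v} of g. *)
Definition fixdim (g : 'M[algC]_3) : nat := \rank (kermx (g - 1)).

Definition diag_SL3_group (G : seq 'M[algC]_3) : bool :=
  [&& uniq G, 1 \in G, all (fun g => all (fun h => g * h \in G) G) G
   & all (fun g => is_diag_mx g && (\det g == 1)) G].

Definition jG (G : seq 'M[algC]_3) : nat :=
  count (fun g => (age (size G) g == 1) && (fixdim g == 0%N)) G.

Definition nK (G : seq 'M[algC]_3) (i : 'I_3) : nat :=
  count (fun g : 'M[algC]_3 => g i i == 1) G.

(* Main.v *)
Set Warnings "-notation-overridden,-ambiguous-paths".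
Require Import Defs.
From HB Require Import structures.
From mathcomp Require Import all_boot all_order all_algebra all_field.
From mathcomp Require Import zify lra.
Import Order.TTheory GRing.Theory Num.Theory.
Open Scope ring_scope.


Lemma key (R : realFieldType) (a b p q : R) : a^+2 + b^+2 = 1 -> p^+2+q^+2 = 1 -> a != 1 -> p <= a ->
  p*a - q*b <= p -> p*a + q*b <= p -> False.
Proof.
move=> h1 h2 h3' h4 h5 h6.
have h3 : a < 1 by rewrite lt_neqAle h3' /=; nra.
have hp : 0 <= p by nra.
nra.
Qed.
Lemma algR_le (x y : algR) : (x <= y) = (algRval x <= algRval y). Proof. by []. Qed.
Lemma keyC (a b p q : algC) : a \is Num.real -> b \is Num.real -> p \is Num.real -> q \is Num.real ->
  a^+2 + b^+2 = 1 -> p^+2+q^+2 = 1 -> a != 1 -> p <= a ->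
  p*a - q*b <= p -> p*a + q*b <= p -> False.
Proof.
move=> ra rb rp rq h1 h2 h3 h4 h5 h6.
pose A := in_algR ra; pose B := in_algR rb; pose P := in_algR rp; pose Q := in_algR rq.
have vi : injective algRval := val_inj.
apply: (@key _ A B P Q).
- apply: vi. rewrite [algRval (_ + _)]rmorphD !rmorphXn rmorph1. done.
- apply: vi. rewrite [algRval (_ + _)]rmorphD !rmorphXn rmorph1. done.
- by rewrite -(inj_eq vi) rmorph1.
- by rewrite algR_le.
- by rewrite algR_le rmorphB !rmorphM.
- by rewrite algR_le rmorphD !rmorphM.
Qed.

Lemma norm_unity {x : algC} {N : nat} : (0 < N)%N -> x ^+ N = 1 -> `|x| = 1.
Proof.
move=> N0 hx; apply/eqP; rewrite -(pexpr_eq1 N0) ?normr_ge0 //.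
by rewrite -normrX hx normr1.
Qed.

Lemma ReIm_unit {x : algC} : `|x| = 1 -> 'Re x ^+ 2 + 'Im x ^+ 2 = 1.
Proof. by move=> h; rewrite -normC2_Re_Im h expr1n. Qed.

Lemma maxRe_prim (N : nat) (x : algC) : (1 < N)%N -> x ^+ N = 1 -> x != 1 ->
  (forall z, z ^+ N = 1 -> z != 1 -> 'Re z <= 'Re x) -> N.-primitive_root x.
Proof.
move=> N1 hxN hx1 hmax; have N0 : (0 < N)%N by apply: ltnW.
have [w pw] := C_prim_root_exists N0.
have [m pxm mdvd] := prim_order_exists N0 hxN.
have [/eqP <- //|mN] := boolP (m == N).
have m0 := prim_order_gt0 pxm.
have hxm := prim_expr_order pxm.
have wm : w ^+ m != 1.
  rewrite -(prim_order_dvd pw); apply/negP => /(dvdn_leq m0) hle.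
  by move: mN; rewrite eqn_leq hle (dvdn_leq N0 mdvd).
pose ord := fun a b : algC => 'Re b <= 'Re a.
have ordr : reflexive ord by move=> a; rewrite /ord.
have ordt : transitive ord by move=> a b c; rewrite /ord => h1 h2; apply: le_trans h2 h1.
have ordT : total ord by move=> a b; rewrite /ord; apply: real_leVge; apply: Creal_Re.
have [k _ hk] := @extremumP _ _ ord (Ordinal m0) predT (fun k : 'I_m => w * x ^+ k) ordr ordt ordT isT.
set u := w * x ^+ k.
have hxn := norm_unity N0 hxN.
have x0 : x != 0 by rewrite -normr_eq0 hxn oner_eq0.
have huN : u ^+ N = 1 by rewrite /u exprMn prim_expr_order // exprAC hxN expr1n mulr1.
have hun := norm_unity N0 huN.
have u1 : u != 1.
  apply: contra wm => /eqP hu.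
  have xku : x ^+ k \is a GRing.unit by rewrite unitfE expf_neq0.
  have -> : w = (x ^+ k)^-1 by apply: (mulIr xku); rewrite mulVr //.
  by rewrite exprVn -exprM mulnC exprM hxm expr1n invr1.
have hpa := hmax u huN u1.
have hux : 'Re (u * x) <= 'Re u.
  have := hk (Ordinal (ltn_pmod k.+1 m0)) isT; rewrite /ord /= expr_mod //.
  by rewrite exprS mulrCA -/u mulrC.
have xinv : x ^+ m.-1 = x^*.
  have -> : x^* = x^-1 by rewrite invC_norm hxn expr1n invr1 mul1r.
  by rewrite -[RHS]mulr1 -hxm -(prednK m0) exprS mulKf.
have hux' : 'Re (u * x^*) <= 'Re u.
  have := hk (Ordinal (ltn_pmod (k + m.-1) m0)) isT; rewrite /ord /= expr_mod //.
  by rewrite exprD mulrA -/u xinv.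
have h5 : 'Re u * 'Re x - 'Im u * 'Im x <= 'Re u by rewrite -ReM.
have h6 : 'Re u * 'Re x + 'Im u * 'Im x <= 'Re u.
  by move: hux'; rewrite ReM Re_conj Im_conj mulrN opprK.
exfalso.
have K := keyC _ _ _ _ (Creal_Re x) (Creal_Im x) (Creal_Re u) (Creal_Im u) (ReIm_unit hxn) (ReIm_unit hun).
apply: (K _ hpa h5 h6).
apply: contra hx1 => /eqP hre.
have : 'Im x ^+ 2 = 0 by have := ReIm_unit hxn; rewrite hre expr1n => h; apply: (addrI 1); rewrite addr0.
move/eqP; rewrite expf_eq0 /= => /eqP him.
by rewrite [x]Crect hre him mulr0 addr0.
Qed.


Lemma zeta_prim {r} : (0 < r)%N -> r.-primitive_root (zeta r).
Proof.
move=> r0; rewrite /zeta.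
have [/eqP r1|r1] := boolP (r == 1%N).
  subst r; rewrite root1C sqrrN expr1n.
  have [w pw] := C_prim_root_exists (isT : (0 < 1)%N).
  by have := prim_expr_order pw; rewrite expr1 => <-.
have r2 : (1 < r)%N by rewrite ltn_neqAle eq_sym r1 r0.
set y := r.-root (-1).
have yr : y ^+ r = -1 by rewrite /y rootCK.
have N1 : (1 < r * 2)%N by rewrite (leq_trans r2) // leq_pmulr.
have N0 : (0 < r * 2)%N by apply: ltnW.
have yN : y ^+ (r * 2) = 1 by rewrite exprM yr sqrrN expr1n.
have m1n1 : (-1 : algC) != 1 by rewrite lt_eqF // (lt_trans (ltrN10 _) ltr01).
have y1 : y != 1 by apply: contra m1n1 => /eqP hy; rewrite -yr hy expr1n.
suff py : (r * 2).-primitive_root y.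
  by have := dvdn_prim_root py (dvdn_mulr 2 (dvdnn r)); rewrite mulKn.
have [w pw] := C_prim_root_exists N0.
pose ord := fun a b : algC => 'Re b <= 'Re a.
have ordr : reflexive ord by move=> a; rewrite /ord.
have ordt : transitive ord by move=> a b c; rewrite /ord => h1 h2; apply: le_trans h2 h1.
have ordT : total ord by move=> a b; rewrite /ord; apply: real_leVge; apply: Creal_Re.
have [k k0 hk] := @extremumP _ _ ord (Ordinal N1) (fun k : 'I_(r * 2) => k != 0 :> nat)
   (fun k : 'I_(r * 2) => w ^+ k) ordr ordt ordT isT.
have maxw : forall z, z ^+ (r * 2) = 1 -> z != 1 -> 'Re z <= 'Re (w ^+ k).
  move=> z zN z1; have [j zj] := prim_rootP pw zN; rewrite zj in z1 *.
  apply: hk; apply: contra z1 => /eqP j0.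
  by rewrite j0 expr0.
have x0N : (w ^+ k) ^+ (r * 2) = 1 by rewrite exprAC (prim_expr_order pw) expr1n.
have x01 : w ^+ k != 1.
  by rewrite -(prim_order_dvd pw); apply/negP => /(dvdn_leq (_ : (0 < k)%N)) => /(_ (ltac:(by rewrite lt0n))) => /idP; rewrite leqNgt ltn_ord.
have [x [xN x1 xre xim]] : exists x, [/\ x ^+ (r * 2) = 1, x != 1, 'Re x = 'Re (w ^+ k) & 0 <= 'Im x].
  have [hi|hi] := boolP (0 <= 'Im (w ^+ k)); first by exists (w ^+ k).
  exists ((w ^+ k)^*); split.
  - by rewrite -rmorphXn x0N rmorph1.
  - by apply: contra x01 => /eqP h; rewrite -[w ^+ k]conjCK h rmorph1.
  - by rewrite Re_conj.
  - by rewrite Im_conj oppr_ge0; move: hi; rewrite -real_ltNge ?Creal_Im ?real0 // => /ltW.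
have px : (r * 2).-primitive_root x.
  apply: maxRe_prim => // z zN z1; rewrite xre; exact: maxw.
have xr : x ^+ r = -1.
  have : (x ^+ r) ^+ 2 = 1 by rewrite -exprM.
  move/eqP; rewrite sqrf_eq1 => /orP [h|/eqP //].
  move: h; rewrite -(prim_order_dvd px) => /(dvdn_leq r0); rewrite leqNgt.
  by rewrite -{1}(muln1 r) ltn_pmul2l.
have le1 := rootC_Re_max r0 xr xim.
have le2 : 'Re y <= 'Re x by rewrite xre; exact: maxw.
have reE : 'Re x = 'Re y by apply/eqP; rewrite eq_le le1 le2.
have imy : 0 <= 'Im y by apply: Im_rootC_ge0.
have xn := norm_unity N0 xN; have yn := norm_unity N0 yN.
have imE : 'Im x = 'Im y.
  apply/eqP; rewrite -(eqrXn2 (isT : (0 < 2)%N)) //; apply/eqP.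
  have := ReIm_unit xn; rewrite -(ReIm_unit yn) reE => /addrI //.
by rewrite -/y [y]Crect -reE -imE -Crect.
Qed.

Lemma diag_entry (d : 'rV[algC]_3) i : diag_mx d i i = d 0 i.
Proof. by rewrite mxE eqxx mulr1n. Qed.

Lemma diagE {g : 'M[algC]_3} : is_diag_mx g -> g = diag_mx (\row_i g i i).
Proof.
move/is_diag_mxP=> hg; apply/matrixP => i j; rewrite !mxE.
have [->|ij] := eqVneq i j; first by rewrite mulr1n.
by rewrite mulr0n hg.
Qed.

Lemma diag1 : (1 : 'M[algC]_3) = diag_mx (\row_i 1).
Proof. by apply/matrixP => i j; rewrite !mxE. Qed.

Lemma diagX (d : 'rV[algC]_3) k : diag_mx d ^+ k = diag_mx (\row_i (d 0 i ^+ k)).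
Proof.
elim: k => [|k IH].
  by rewrite expr0 diag1; congr diag_mx; apply/rowP => i; rewrite !mxE.
rewrite exprS IH -mulmxE mulmx_diag; congr diag_mx; apply/rowP => i; rewrite !mxE exprS.
done.
Qed.

Lemma diagX_entry (g : 'M[algC]_3) k i : is_diag_mx g -> (g ^+ k) i i = g i i ^+ k.
Proof. move=> hg; rewrite {1}(diagE hg). rewrite diagX diag_entry !mxE. reflexivity. Qed.

Lemma diagX_diag (g : 'M[algC]_3) k : is_diag_mx g -> is_diag_mx (g ^+ k).
Proof. by move=> hg; rewrite {1}(diagE hg) diagX diag_mx_is_diag. Qed.

Lemma diag_eq1 (g : 'M[algC]_3) : is_diag_mx g -> (forall i, g i i = 1) -> g = 1.
Proof.
move=> hg h; rewrite (diagE hg) diag1; congr diag_mx; apply/rowP => i; rewrite !mxE h.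
done.
Qed.

Lemma det_diagE (g : 'M[algC]_3) : is_diag_mx g -> \det g = \prod_(i < 3) g i i.
Proof.
move=> hg; rewrite {1}(diagE hg) det_diag; apply: eq_bigr => i _; rewrite mxE.
reflexivity.
Qed.

Lemma fixdim0 (g : 'M[algC]_3) : is_diag_mx g ->
  (fixdim g == 0%N) = (\prod_(i < 3) (g i i - 1) != 0).
Proof.
move=> hg; rewrite /fixdim mxrank_ker.
have -> : g - 1 = diag_mx (\row_i (g i i - 1)).
  rewrite {1}(diagE hg) diag1; apply/matrixP => i j; rewrite !mxE.
  by case: (i == j); rewrite ?mulr1n ?mulr0n ?subr0.
have e : (\prod_(i < 3) (g i i - 1)) = \det (diag_mx (\row_i (g i i - 1))).
  by rewrite det_diag; apply: eq_bigr => i _; rewrite mxE.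
rewrite e -unitfE -unitmxE -row_full_unit /row_full subn_eq0.
by rewrite eqn_leq rank_leq_col.
Qed.

Lemma Gprops {G} : diag_SL3_group G -> [/\ uniq G, 1 \in G, {in G &, forall g h, g * h \in G},
   {in G, forall g, is_diag_mx g} & {in G, forall g, \det g = 1}].
Proof.
case/and4P=> u o /allP m /allP d; split => //.
- by move=> g h gG hG; have /allP := m g gG; apply.
- by move=> g gG; case/andP: (d g gG).
- by move=> g gG; case/andP: (d g gG) => _ /eqP.
Qed.

Lemma GX {G g} k : diag_SL3_group G -> g \in G -> g ^+ k \in G.
Proof.
case/Gprops=> _ o m _ _ gG; elim: k => [|k IH]; first by rewrite expr0.
by rewrite exprS m.
Qed.

Lemma G_unit {G g} : diag_SL3_group G -> g \in G -> g \is a GRing.unit.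
Proof.
case/Gprops=> _ _ _ _ d gG.
have : g \in unitmx by rewrite unitmxE d // unitr1.
done.
Qed.

Lemma G_fin {G g} : diag_SL3_group G -> g \in G -> exists s, (0 < s <= size G)%N /\ g ^+ s = 1.
Proof.
move=> hG gG; set N := size G.
pose L := mkseq (fun k => g ^+ k.+1) N.+1.
have : ~~ uniq L.
  apply/negP => uL.
  have sub : {subset L <= G} by move=> x /mapP [k _ ->]; exact: GX.
  by have := uniq_leq_size uL sub; rewrite size_mkseq -/N ltnn.
case/(uniqPn 0) => i [j [ij jL]]; rewrite size_mkseq in jL.
rewrite !nth_mkseq // ?(ltn_trans ij) // => e.
exists (j - i)%N; split; first by apply/andP; split; [rewrite subn_gt0 | lia].
have gu := G_unit hG gG.
apply: (mulrI (unitrX i.+1 gu)); rewrite mulr1 -exprD.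
by rewrite e; congr (g ^+ _); lia.
Qed.

Lemma order_spec {G g} : diag_SL3_group G -> g \in G -> g ^+ mx_order (size G) g = 1.
Proof.
move=> hG gG; have [s [/andP [s0 sN] gs]] := G_fin hG gG.
set N := size G; set P := fun r => g ^+ r.+1 == 1.
have hP : has P (iota 0 N).
  apply/hasP; exists s.-1; first by rewrite mem_iota; lia.
  by rewrite /P prednK // gs.
have := nth_find 0 hP; rewrite nth_iota ?add0n; last by move: hP; rewrite has_find size_iota.
by move/eqP.
Qed.

Lemma order_eq N (g h : 'M[algC]_3) : (forall s, (h ^+ s == 1) = (g ^+ s == 1)) ->
  mx_order N h = mx_order N g.
Proof. by move=> e; rewrite /mx_order (eq_find (fun r => e r.+1)). Qed.

Lemma powpow {g : 'M[algC]_3} {r} : (0 < r)%N -> g ^+ r = 1 -> (g ^+ r.-1) ^+ r.-1 = g.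
Proof.
move=> r0 gr; rewrite -exprM -(expr_mod _ gr).
have [r1|r1] := boolP (r == 1%N).
  by rewrite (eqP r1) modn1 expr0 -gr (eqP r1) expr1.
have -> : (r.-1 * r.-1 = (r - 2) * r + 1)%N.
  have : (1 < r)%N by rewrite ltn_neqAle eq_sym r1 r0.
  case: r r0 gr r1 => [|[|r]] //= _ _ _ _; nia.
rewrite modnMDl modn_small ?expr1 //.
by rewrite ltn_neqAle eq_sym r1 r0.
Qed.

Definition phi (N : nat) (g : 'M[algC]_3) := g ^+ (mx_order N g).-1.

Lemma phi_order N (g : 'M[algC]_3) : g ^+ mx_order N g = 1 -> mx_order N (phi N g) = mx_order N g.
Proof.
move=> gr; apply: order_eq => s; rewrite /phi.
have r0 : (0 < mx_order N g)%N by [].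
apply/idP/idP => /eqP h.
- by rewrite -(powpow r0 gr) exprAC h expr1n.
- by rewrite exprAC h expr1n.
Qed.

Lemma phiK {N} {g : 'M[algC]_3} : g ^+ mx_order N g = 1 -> phi N (phi N g) = g.
Proof. by move=> gr; rewrite {1}/phi phi_order // /phi powpow. Qed.

Lemma expo_eq {r a z} : (0 < r)%N -> (a < r)%N -> zeta r ^+ a = z -> expo r z = a.
Proof.
move=> r0 ar hz; have pz := zeta_prim r0.
rewrite /expo; case: pickP => [b /eqP hb | none] /=.
  apply/eqP; rewrite -(modn_small ar) -(modn_small (ltn_ord b)).
  by rewrite -(eq_prim_root_expr pz) hb hz.
by have := none (Ordinal ar); rewrite /= hz eqxx.
Qed.

Lemma expo_spec {r z} : (0 < r)%N -> z ^+ r = 1 -> zeta r ^+ expo r z = z /\ (expo r z < r)%N.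
Proof.
move=> r0 zr; have [i ->] := prim_rootP (zeta_prim r0) zr.
by rewrite (expo_eq r0 (ltn_ord i) erefl).
Qed.

Lemma ratdiv1 n r : (0 < r)%N -> ((n%:R / r%:R : rat) == 1) = (n == r).
Proof.
move=> r0; have y0 : (r%:R : rat) != 0 by rewrite pnatr_eq0 -lt0n.
by rewrite -(inj_eq (mulIf y0)) mulfVK // mul1r eqr_nat.
Qed.

Lemma natfact {r x} : (0 < r)%N -> (x < r)%N -> (0 < x)%N -> (x * r.-1 = (x - 1) * r + (r - x))%N.
Proof. by case: r => // r _; rewrite /=; nia. Qed.

Lemma age_pair {G g} : diag_SL3_group G -> g \in G -> (forall i, g i i != 1) ->
  (forall i, phi (size G) g i i != 1) /\
  ((age (size G) g == 1) = ~~ (age (size G) (phi (size G) g) == 1)).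
Proof.
move=> hG gG hne; have [_ _ _ Gd Gdet] := Gprops hG.
set N := size G; set r := mx_order N g.
have gr : g ^+ r = 1 := order_spec hG gG.
have r0 : (0 < r)%N by [].
have pz := zeta_prim r0.
have di i : g i i ^+ r = 1 by rewrite -diagX_entry ?Gd // gr mxE eqxx.
pose a i := expo r (g i i).
have ha i : zeta r ^+ a i = g i i by case: (expo_spec r0 (di i)).
have lta i : (a i < r)%N by case: (expo_spec r0 (di i)).
have a0 i : (0 < a i)%N.
  rewrite lt0n; apply: contra (hne i) => /eqP e; by rewrite -ha e expr0.
have hdvd : (r %| \sum_(i < 3) a i)%N.
  rewrite (prim_order_dvd pz) !big_ord_recl big_ord0 addn0 !exprD !ha.
  by rewrite -(Gdet g gG) det_diagE ?Gd // !big_ord_recl big_ord0 mulr1 mulrA.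
have hh i : phi N g i i = zeta r ^+ (r - a i).
  rewrite /phi -/r diagX_entry ?Gd // -ha -exprM; apply/eqP.
  rewrite (eq_prim_root_expr pz); apply/eqP.
  have := a0 i; have := lta i; move: (a i) => x x1 x2.
  by rewrite (natfact r0 x1 x2) modnMDl.
have hb i : expo r (phi N g i i) = (r - a i)%N.
  by apply: expo_eq => //; rewrite ?hh ?ltn_subrL ?a0 ?r0.
split.
  move=> i; rewrite hh -(prim_order_dvd pz); apply/negP => /(dvdn_leq _).
  by rewrite subn_gt0 lta leqNgt ltn_subrL a0 r0 => /(_ isT).
rewrite /age /= phi_order // -/r.
have -> : (\sum_(i < 3) expo r (phi N g i i) = \sum_(i < 3) (r - a i))%N by apply: eq_bigr => i _; rewrite hb.
rewrite !ratdiv1 //.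
move: hdvd; rewrite !big_ord_recl !big_ord0 !addn0.
have := lta ord0; have := lta (lift ord0 ord0); have := lta (lift ord0 (lift ord0 ord0)).
have := a0 ord0; have := a0 (lift ord0 ord0); have := a0 (lift ord0 (lift ord0 ord0)).
rewrite /a.
move: (expo r _) (expo r _) (expo r _) => x y z hx hy hz lx ly lz /dvdnP [q hq].
have : (q = 1 \/ q = 2)%N by nia.
case=> e; subst q; rewrite hq; case: eqP => hA; case: eqP => hB //=; exfalso; lia.
Qed.

Lemma count_lin (T : eqType) (s : seq T) (k : nat) (a b c d e : pred T) :
  {in s, forall x, (a x + b x + c x = k * d x + e x)%N} ->
  (count a s + count b s + count c s = k * count d s + count e s)%N.
Proof.
elim: s => [|x s IH] h; first by rewrite /= muln0.
rewrite /=.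
have hx := h x (mem_head x s).
have := IH (fun y ys => h y (mem_behead (ys : y \in behead (x :: s)))); nia.
Qed.

Notation i0 := (ord0 : 'I_3).
Notation i1 := (lift ord0 (ord0 : 'I_2) : 'I_3).
Notation i2 := (lift ord0 (lift ord0 (ord0 : 'I_1)) : 'I_3).

Lemma fixdim0E (x : 'M[algC]_3) : is_diag_mx x ->
  (fixdim x == 0%N) = [&& x i0 i0 != 1, x i1 i1 != 1 & x i2 i2 != 1].
Proof.
move=> hx; rewrite fixdim0 // !big_ord_recl big_ord0 mulr1 !mulf_eq0 !subr_eq0.
by rewrite !negb_or.
Qed.

Lemma proposition1_aux (G : seq 'M[algC]_3) :
  diag_SL3_group G ->
  size G = (1 + 2 * jG G + \sum_(i < 3) (nK G i - 1))%N.
Proof.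
move=> hG; have [Gu G1 Gm Gd Gdet] := Gprops hG.
set N := size G.
pose Z := fun x : 'M[algC]_3 => fixdim x == 0%N.
pose A1 := fun x : 'M[algC]_3 => (age N x == 1) && (fixdim x == 0%N).
pose p1 := fun x : 'M[algC]_3 => [&& x i0 i0 == 1, x i1 i1 == 1 & x i2 i2 == 1].
pose p3 := fun x : 'M[algC]_3 => [&& x i0 i0 != 1, x i1 i1 != 1 & x i2 i2 != 1].
pose p2 := fun x : 'M[algC]_3 => ~~ p1 x && ~~ p3 x.
pose e := fun (i : 'I_3) (x : 'M[algC]_3) => x i i == 1.
have det3 : {in G, forall x : 'M[algC]_3, x i0 i0 * x i1 i1 * x i2 i2 = 1}.
  by move=> x xG; rewrite -(Gdet x xG) det_diagE ?Gd // !big_ord_recl big_ord0 mulr1 mulrA.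
have c1 : count p1 G = 1%N.
  transitivity (count_mem (1 : 'M[algC]_3) G); last by rewrite count_uniq_mem // G1.
  apply: eq_in_count => x xG /=.
  rewrite /p1; apply/idP/eqP => [/and3P [/eqP h0 /eqP h1 /eqP h2]| ->]; last first.
    by rewrite !mxE !eqxx.
  apply: diag_eq1; first exact: Gd.
  move=> i; case: i => [[|[|[|]]]] // ? .
  - by rewrite -h0; congr (x _ _); apply: val_inj.
  - by rewrite -h1; congr (x _ _); apply: val_inj.
  - by rewrite -h2; congr (x _ _); apply: val_inj.
have csize : (count p1 G + count p2 G + count p3 G = 1 * count predT G + count pred0 G)%N.
  apply: count_lin => x xG /=; rewrite /p2 /p1 /p3.
  by case: (x i0 i0 == 1); case: (x i1 i1 == 1); case: (x i2 i2 == 1).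
rewrite count_predT count_pred0 -/N in csize.
have cnk : (count (e i0) G + count (e i1) G + count (e i2) G = 3 * count p1 G + count p2 G)%N.
  apply: count_lin => x xG; rewrite /e /p2 /p1 /p3.
  have := det3 x xG.
  case e0 : (x i0 i0 == 1); case e1 : (x i1 i1 == 1); case e2 : (x i2 i2 == 1) => //= hd.
  - by move: hd; rewrite (eqP e0) (eqP e1) !mul1r => hd; rewrite hd eqxx in e2.
  - by move: hd; rewrite (eqP e0) (eqP e2) mul1r mulr1 => hd; rewrite hd eqxx in e1.
  - by move: hd; rewrite (eqP e1) (eqP e2) !mulr1 => hd; rewrite hd eqxx in e0.
have phiG : {in G, forall x, phi N x \in G} by move=> x xG; exact: GX.
have c3 : (count p3 G + count pred0 G + count pred0 G = 1 * count A1 G + count (fun x => A1 (phi N x)) G)%N.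
  apply: count_lin => x xG /=; rewrite !addn0 mul1n.
  have xd := Gd x xG; have pd := Gd _ (phiG x xG).
  rewrite /A1 !fixdim0E // -/(p3 x).
  have [hp|hp] := boolP (p3 x).
    have hne : forall i, x i i != 1.
      move: hp => /and3P [h0 h1 h2] i; case: i => [[|[|[|]]]] // ?.
      - by move: h0; congr (x _ _ != _); apply: val_inj.
      - by move: h1; congr (x _ _ != _); apply: val_inj.
      - by move: h2; congr (x _ _ != _); apply: val_inj.
    have [hph hage] := age_pair hG xG hne.
    rewrite !hph /= andbT hage.
    by case: (age N (phi N x) == 1).
  rewrite andbF /=.
  have hq : forall i, x i i == 1 -> phi N x i i == 1.
    by move=> i xi; rewrite /phi diagX_entry // (eqP xi) expr1n.
  move: hp; rewrite /p3 -!negb_or negbK => /or3P [h|h|h]; rewrite (eqP (hq _ h)) eqxx /= ?orbT /= ?andbF ?add0n //.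

have cmap : count (fun x => A1 (phi N x)) G = count A1 G.
  rewrite -(count_map (phi N) A1); apply/permP; apply: uniq_perm => //.
    rewrite map_inj_in_uniq // => u v uG vG euv.
    by rewrite -(phiK (order_spec hG uG)) euv (phiK (order_spec hG vG)).
  move=> w; apply/mapP/idP => [[y yG ->]|wG]; first exact: phiG.
  exists (phi N w); first exact: phiG.
  by rewrite (phiK (order_spec hG wG)).
have hj : jG G = count A1 G by [].
have pos i : (0 < count (e i) G)%N.
  rewrite -has_count; apply/hasP; exists 1 => //; by rewrite /e mxE eqxx.
have hnk i : nK G i = count (e i) G by [].
rewrite !big_ord_recl big_ord0 !hnk hj.
rewrite cmap count_pred0 in c3.
have := pos i0; have := pos i1; have := pos i2.
lia.
Qed.

Close Scope ring_scope.

Theorem proposition1 (G : seq 'M[algC]_3) :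
  diag_SL3_group G ->
  size G = (1 + 2 * jG G + \sum_(i < 3) (nK G i - 1))%N.
Proof. exact: proposition1_aux. Qed.
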